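(* Let $\lambda=\langle1^{m_1},2^{m_2},\dots,k^{m_k}\rangle$ with all $m_i>0$, $n\ge1$, $x_1,\dots,x_n>0$, $t>0$. For $1\le j\le k$ let $M_j=m_j+\dots+m_k$ and $M_{k+1}=0$. Under the stationary distribution of the mTAZRP of type $\lambda$ on $n$ sites, the expected number of particles of species $j$ at site $1$ is $$\langle\tau^{(j)}_1\rangle=x_1\frac{\partial}{\partial x_1}\log\left(\frac{\widetilde H_{\langle1^{M_j}\rangle}(x_1,\dots,x_n;1,t)}{\widetilde H_{\langle1^{M_{j+1}}\rangle}(x_1,\dots,x_n;1,t)}\right),$$ with $\widetilde H_{\langle1^0\rangle}:=1$.
   Context: mTAZRP: for a partition $\lambda$ and $n\ge1$, sites $1,\dots,n$ on a ring (site $n+1$ is site $1$); a configuration assigns to each site a multiset of species with union the multiset of parts of $\lambda$; if site $j$ has $c$ particles of species $r$ and $d$ of species larger than $r$, a particle of species $r$ jumps from $j$ to $j+1$ at rate $x_j^{-1}t^d(1+t+\dots+t^{c-1})$. $\langle1^{m_1},\dots,k^{m_k}\rangle$ denotes the partition with part $i$ occurring $m_i$ times. Notation: $[a]_t=1+t+\dots+t^{a-1}$, $[a]_t!=\prod_{b\le a}[b]_t$, $\begin{bmatrix}m\\ \eta_1,\dots,\eta_n\end{bmatrix}_t=[m]_t!/\prod_i[\eta_i]_t!$, and $\widetilde H_{\langle1^m\rangle}(x_1,\dots,x_n;1,t)=\sum_{\eta_1+\dots+\eta_n=m,\ \eta_i\ge0}\begin{bmatrix}m\\ \eta_1,\dots,\eta_n\end{bmatrix}_t\prod_i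 x_i^{\eta_i}$. *)

(* Defs.v *)
From HB Require Import structures.
From mathcomp Require Import all_boot all_order all_algebra.
From mathcomp Require Import all_classical all_reals all_analysis.
Set Implicit Arguments. Unset Strict Implicit. Unset Printing Implicit Defensive.
Import Order.TTheory GRing.Theory Num.Theory.
Local Open Scope ring_scope.

Section MTAZRP.
Variable R : realType.

Definition qint (t : R) (a : nat) : R := \sum_(b < a) t ^+ b.
Definition qfact (t : R) (a : nat) : R := \prod_(b < a) qint t b.+1.

(* \tilde H_{<1^m>}(x_1..x_n; 1, t) = sum over compositions eta of m into n
   nonnegative parts of the t-multinomial times prod x_i^eta_i.
   (For m = 0 this sum is 1.) *)
Definition Htilde (n m : nat) (x : 'I_n -> R) (t : R) : R :=
  \sum_(eta : {ffun 'I_n -> 'I_m.+1} | (\sum_(i < n) (eta i : nat) == m)%N)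
     (qfact t m / \prod_(i < n) qfact t (eta i)) * \prod_(i < n) x i ^+ eta i.

(* Configurations of the mTAZRP of type <1^{m_1},...,k^{m_k}> on n sites:
   eta r i = number of particles of species r+1 at site i+1 (r : 'I_k,
   i : 'I_n); bounded by N = total number of particles. *)
Definition tot (k : nat) (m : 'I_k -> nat) : nat := (\sum_(r < k) m r)%N.

Definition config (k n : nat) (m : 'I_k -> nat) :=
  {ffun 'I_k -> {ffun 'I_n -> 'I_(tot m).+1}}.

Definition valid (k n : nat) (m : 'I_k -> nat) (eta : config n m) : bool :=
  [forall r : 'I_k, (\sum_(i < n) (eta r i : nat) == m r)%N].

Definition moved (k n : nat) (m : 'I_k -> nat) (eta : config n m)
    (r : 'I_k) (j : 'I_n) (eta' : config n m) : bool :=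
  (0 < eta r j)%N &&
  [forall r' : 'I_k, forall i : 'I_n,
     (eta' r' i : nat) ==
     ((eta r' i - ((r' == r) && (i == j))) + ((r' == r) && (i == ordS j)))%N].

Definition jump_rate (k n : nat) (m : 'I_k -> nat) (x : 'I_n -> R) (t : R)
    (eta : config n m) (r : 'I_k) (j : 'I_n) : R :=
  (x j)^-1 * t ^+ (\sum_(r' < k | (r < r')%N) (eta r' j : nat))%N
           * qint t (eta r j).

Definition Q (k n : nat) (m : 'I_k -> nat) (x : 'I_n -> R) (t : R)
    (eta eta' : config n m) : R :=
  \sum_(r < k) \sum_(j < n)
     (if moved eta r j eta' then jump_rate x t eta r j else 0).

Definition stationary (k n : nat) (m : 'I_k -> nat) (x : 'I_n -> R) (t : R)
    (pi : config n m -> R) : Prop :=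
  (forall eta, ~~ valid eta -> pi eta = 0) /\
  (forall eta, 0 <= pi eta) /\
  (\sum_(eta | valid eta) pi eta = 1) /\
  (forall eta, valid eta ->
     \sum_(eta' | valid eta') pi eta' * Q x t eta' eta
     = \sum_(eta' | valid eta') pi eta * Q x t eta eta').

Definition expected_count (k n : nat) (m : 'I_k -> nat)
    (pi : config n m -> R) (j : 'I_k) (site : 'I_n) : R :=
  \sum_(eta | valid eta) pi eta * (eta j site : nat)%:R.

(* M_{j+1} = m_{j+1} + ... + m_k  (0-indexed j) and M_{j+2} *)
Definition Mge (k : nat) (m : 'I_k -> nat) (j : 'I_k) : nat :=
  (\sum_(r < k | (j <= r)%N) m r)%N.
Definition Mgt (k : nat) (m : 'I_k -> nat) (j : 'I_k) : nat :=
  (\sum_(r < k | (j < r)%N) m r)%N.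

Definition setx (n : nat) (x : 'I_n -> R) (i0 : 'I_n) (y : R) : 'I_n -> R :=
  fun i => if i == i0 then y else x i.

End MTAZRP.

(* Main.v *)
Require Import Defs.
From HB Require Import structures.
From mathcomp Require Import all_boot all_order all_algebra.
From mathcomp Require Import all_classical all_reals all_analysis.
From mathcomp Require Import zify ring lra.
Set Implicit Arguments. Unset Strict Implicit. Unset Printing Implicit Defensive.
Import Order.TTheory GRing.Theory Num.Theory.
Local Open Scope ring_scope.

Section Generic.
Variable R : realType.

Lemma sum_ind1 (n : nat) (j : 'I_n) : (\sum_(i < n) ((i == j) : nat) = 1)%N.
Proof. by rewrite (bigD1 j) //= eqxx big1 // => i /negbTE ->. Qed.

Lemma two_le (n : nat) (f : 'I_n -> nat) (i j : 'I_n) :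
  i != j -> (f i + f j <= \sum_(l < n) f l)%N.
Proof.
move=> ij; rewrite (bigD1 i) //= (bigD1 j) /=; last by rewrite eq_sym.
by rewrite addnA leq_addr.
Qed.

Lemma one_le (n : nat) (f : 'I_n -> nat) (i : 'I_n) :
  (f i <= \sum_(l < n) f l)%N.
Proof. by rewrite (bigD1 i) //= leq_addr. Qed.

Lemma qint0 (t : R) : qint t 0 = 0.
Proof. by rewrite /qint big_ord0. Qed.

Lemma qint_gt0 (t : R) a : 0 < t -> (0 < a)%N -> 0 < qint t a.
Proof.
move=> ht; case: a => // a _; rewrite /qint big_ord_recl expr0.
have : 0 <= \sum_(i < a) t ^+ (bump 0 i) by apply: sumr_ge0 => i _; apply: exprn_ge0; lra.
lra.
Qed.

Lemma qint_ge0 (t : R) a : 0 < t -> 0 <= qint t a.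
Proof. move=> ht; apply: sumr_ge0 => i _; apply: exprn_ge0; lra. Qed.

Lemma qfact_gt0 (t : R) a : 0 < t -> 0 < qfact t a.
Proof. by move=> ht; apply: prodr_gt0 => i _; apply: qint_gt0. Qed.

Lemma qfactS (t : R) a : qfact t a.+1 = qfact t a * qint t a.+1.
Proof. by rewrite /qfact big_ord_recr. Qed.

End Generic.

Section ZRP.
Variables (R : realType) (n N : nat) (hn : (0 < n)%N) (x : 'I_n -> R)
  (hx : forall i, 0 < x i) (t : R) (ht : 0 < t).

Definition compo (v : {ffun 'I_n -> 'I_N.+1}) : bool := (\sum_(i < n) (v i : nat) == N)%N.

Definition pre (j : 'I_n) (v : {ffun 'I_n -> 'I_N.+1}) : {ffun 'I_n -> 'I_N.+1} :=
  [ffun i => inord ((v i + (i == j)) - (i == ordS j))%N].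

Definition wt (v : {ffun 'I_n -> 'I_N.+1}) : R :=
  (\prod_(i < n) x i ^+ v i) / \prod_(i < n) qfact t (v i).

Lemma wt_gt0 v : 0 < wt v.
Proof using hx ht.
clear hn.
apply: divr_gt0; apply: prodr_gt0 => i _; last exact: qfact_gt0.
by apply: exprn_gt0.
Qed.

Lemma pre_val v j i : compo v -> (0 < v (ordS j))%N ->
  (pre j v i : nat) = ((v i + (i == j)) - (i == ordS j))%N.
Proof using .
clear hn hx ht.
move=> /eqP cv vS; rewrite ffunE inordK //.
have vi := ltn_ord (v i).
case: (eqVneq i j) => [-> | ij] /=; last by lia.
have vj := ltn_ord (v j).
case E: (j == ordS j); first by move: vj => /=; lia.
have := two_le (fun l => (v l : nat)) (negbT E); rewrite cv; lia.
Qed.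

Lemma compo_pre v j : compo v -> (0 < v (ordS j))%N -> compo (pre j v).
Proof using .
clear hn hx ht.
move=> cv vS; have cv' := cv; move/eqP: cv' => cv'.
rewrite /compo; under eq_bigr => i _ do rewrite pre_val //.
rewrite sumnB; last first.
  move=> i _; case: (eqVneq i (ordS j)) => [->|]; rewrite /=; last by lia.
  lia.
by rewrite big_split /= sum_ind1 cv' sum_ind1 addnK.
Qed.

Lemma prod2 (F : 'I_n -> R) (j : 'I_n) : j != ordS j ->
  \prod_(i < n) F i = F j * F (ordS j) * \prod_(i < n | (i != j) && (i != ordS j)) F i.
Proof using .
clear hn hx ht.
move=> jS; rewrite (bigD1 j) //= (bigD1 (ordS j)) /=; last by rewrite eq_sym.
by rewrite mulrA.
Qed.

Lemma wt_pre v j : compo v -> (0 < v (ordS j))%N ->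
  wt (pre j v) * ((x j)^-1 * qint t (pre j v j))
  = wt v * ((x (ordS j))^-1 * qint t (v (ordS j))).
Proof using hx ht.
clear hn.
move=> cv vS.
case: (eqVneq j (ordS j)) => [jS|jS].
  have -> : pre j v = v.
    by apply/ffunP => i; apply: val_inj; rewrite /= pre_val // -jS; lia.
  by rewrite -jS.
have pj : (pre j v j : nat) = (v j).+1 by rewrite pre_val // eqxx (negbTE jS); lia.
have pS : (pre j v (ordS j) : nat) = (v (ordS j)).-1
  by rewrite pre_val // eqxx eq_sym (negbTE jS); lia.
have po : forall i, i != j -> i != ordS j -> (pre j v i : nat) = v i.
  by move=> i ij iS; rewrite pre_val // (negbTE ij) (negbTE iS) addn0 subn0.
rewrite /wt (prod2 _ jS) (prod2 (fun i => qfact t (pre j v i)) jS).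
rewrite (prod2 (fun i => x i ^+ v i) jS) (prod2 (fun i => qfact t (v i)) jS).
rewrite (eq_bigr (fun i => x i ^+ v i)); last by move=> i /andP [a b]; rewrite po.
rewrite [X in _ / (_ * X) * _ = _](eq_bigr (fun i => qfact t (v i))); last by move=> i /andP [a b]; rewrite po.
rewrite pj pS.
move: vS; case E : (v (ordS j) : nat) => [//|b] _ /=.
rewrite !exprS !qfactS.
set P1 := \prod_(i | _) x i ^+ v i.
set P2 := \prod_(i | _) qfact t (v i).
have hP1 : P1 != 0 by apply/lt0r_neq0/prodr_gt0 => i _; apply: exprn_gt0.
have hP2 : P2 != 0 by apply/lt0r_neq0/prodr_gt0 => i _; apply: qfact_gt0.
have h1 : x j != 0 by apply/lt0r_neq0.
have h2 : x (ordS j) != 0 by apply/lt0r_neq0.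
have h3 : qint t (v j).+1 != 0 by apply/lt0r_neq0/qint_gt0.
have h4 : qint t b.+1 != 0 by apply/lt0r_neq0/qint_gt0.
have h5 : qfact t (v j) != 0 by apply/lt0r_neq0/qfact_gt0.
have h6 : qfact t b != 0 by apply/lt0r_neq0/qfact_gt0.
field.
by rewrite h1 h2 h3 h4 h5 h6 hP2.
Qed.

Definition i0 : 'I_n := Ordinal hn.
Definition C0 : {ffun 'I_n -> 'I_N.+1} := [ffun i => if i == i0 then ord_max else ord0].

Lemma compo_C0 : compo C0.
Proof.
rewrite /compo (bigD1 i0) //= ffunE eqxx big1 ?addn0 // => i /negbTE ih.
by rewrite ffunE ih.
Qed.

Definition balance (g : {ffun 'I_n -> 'I_N.+1} -> R) :=
  forall v, compo v ->
  \sum_(j < n) (if (0 < v (ordS j))%N then (x j)^-1 * qint t (pre j v j) * g (pre j v) else 0)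
  = g v * \sum_(j < n) (x j)^-1 * qint t (v j).

Lemma balanceN g : balance g -> balance (fun v => - g v).
Proof using hx ht.
clear hn.
move=> bg v cv; rewrite mulNr -bg // -sumrN; apply: eq_bigr => j _.
by case: ifP => _; rewrite ?oppr0 // mulrN.
Qed.

Lemma max_step g v j : balance g -> compo v ->
  (forall u, compo u -> g u / wt u <= g v / wt v) -> (0 < v (ordS j))%N ->
  g (pre j v) / wt (pre j v) = g v / wt v.
Proof using hx ht.
clear hn.
move=> bg cv Hmax vS.
set f := fun u => g u / wt u.
have gE : forall u, g u = f u * wt u.
  by move=> u; rewrite /f divfK // lt0r_neq0 // wt_gt0.
pose b i := wt v * ((x (ordS i))^-1 * qint t (v (ordS i))).
have bge0 : forall i, 0 <= b i.
  move=> i; apply: mulr_ge0; first exact: ltW (wt_gt0 v).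
  apply: mulr_ge0; last exact: qint_ge0.
  by rewrite invr_ge0 ltW.
have H : \sum_(i < n) (f v - f (pre i v)) * b i = 0.
  have := bg v cv.
  rewrite (eq_bigr (fun i => f (pre i v) * b i)); last first.
    move=> i _; case: ifP => vi.
      by rewrite gE /b -wt_pre //; ring.
    rewrite /b; have -> : (v (ordS i) : nat) = 0%N by move: vi; case: (v (ordS i) : nat).
    by rewrite qint0 !mulr0.
  have RE : \sum_(j < n) (x j)^-1 * qint t (v j) = \sum_(j < n) (x (ordS j))^-1 * qint t (v (ordS j)).
    exact: (reindex_inj (@ordS_inj n)).
  rewrite RE gE -mulrA mulr_sumr => E.
  under eq_bigr => i _ do rewrite mulrBl.
  by rewrite sumrB E -mulr_sumr /b -mulr_sumr [in X in _ - X]mulr_sumr subrr.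
have := psumr_eq0P _ H.
have Hj : (f v - f (pre j v)) * b j = 0.
  apply: (psumr_eq0P _ H) => // i _.
  case: (posnP (v (ordS i))) => vi.
    by rewrite /b vi qint0 !mulr0.
  apply: mulr_ge0 => //.
  by rewrite subr_ge0; apply: Hmax; apply: compo_pre.
move=> _.
have bj : 0 < b j.
  apply: mulr_gt0; first exact: wt_gt0.
  by apply: mulr_gt0; [rewrite invr_gt0|apply: qint_gt0].
move/eqP: Hj; rewrite mulf_eq0 (gt_eqF bj) orbF subr_eq0 => /eqP.
by rewrite /f => <-.
Qed.

Definition pot (v : {ffun 'I_n -> 'I_N.+1}) : nat := (\sum_(i < n) i * v i)%N.

Lemma sum_mul_ind (j : 'I_n) : (\sum_(l < n) l * (l == j))%N = j.
Proof using .
clear hn hx ht.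
rewrite (bigD1 j) //= eqxx muln1 big1 ?addn0 // => i /negbTE ->.
by rewrite muln0.
Qed.

Lemma pot_pre v (i : 'I_n) (i1 : (i.-1 < n)%N) : compo v -> (0 < i)%N -> (0 < v i)%N ->
  ordS (Ordinal i1) = i /\ (pot (pre (Ordinal i1) v) < pot v)%N.
Proof using .
clear hn hx ht.
move=> cv ip vi.
have Sj : ordS (Ordinal i1) = i.
  apply: val_inj => /=; rewrite prednK // modn_small //.
split => //.
rewrite /pot; under eq_bigr => l _ do rewrite pre_val ?Sj // mulnBr mulnDr.
rewrite sumnB; last first.
  move=> l _; case: (eqVneq l i) => [->|]; rewrite /= ?muln0 //; nia.
rewrite big_split /= !sum_mul_ind /=.
have h := one_le (fun l : 'I_n => (l * v l)%N) i; simpl in h; nia.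
Qed.

Lemma reach (P : {ffun 'I_n -> 'I_N.+1} -> Prop) :
  (forall v j, compo v -> (0 < v (ordS j))%N -> P v -> P (pre j v)) ->
  forall v, compo v -> P v -> P C0.
Proof.
move=> HP v.
have [p Hp] : exists p, (pot v <= p)%N by exists (pot v).
elim: p v Hp => [|p IH] v Hp cv Pv.
- case: (pickP (fun i : 'I_n => (0 < i)%N && (0 < v i)%N)) => [i /andP [i1 i2]|none].
    have : (i * v i <= pot v)%N by apply: (one_le (fun l : 'I_n => (l * v l)%N)).
    have : (0 < i * v i)%N by rewrite muln_gt0 i1.
    lia.
  have z : forall l : 'I_n, l != i0 -> (v l : nat) = 0%N.
    move=> l /eqP li; have := none l; rewrite /=.
    have -> : (0 < l)%N by case: l li => [[|l'] ?] //= /eqP; rewrite /i0.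
    by case: (v l : nat).
  have E : C0 = v.
    apply/ffunP => i; rewrite ffunE; apply: val_inj.
    case: (eqVneq i i0) => [->|ii]; last by rewrite /= z.
    rewrite /=; move/eqP: cv; rewrite (bigD1 i0) //= big1 ?addn0 // => l li.
  by rewrite E.
- case: (pickP (fun i : 'I_n => (0 < i)%N && (0 < v i)%N)) => [i /andP [i1 i2]|none].
    have i1' : (i.-1 < n)%N by case: i i1 {i2} => [[|i'] ?] //= _; lia.
    have [Sj lt] := pot_pre i1' cv i1 i2.
    apply: (IH (pre (Ordinal i1') v)); first by lia.
      by apply: compo_pre; rewrite // Sj.
    by apply: HP; rewrite ?Sj.
  have z : forall l : 'I_n, l != i0 -> (v l : nat) = 0%N.
    move=> l /eqP li; have := none l; rewrite /=.
    have -> : (0 < l)%N by case: l li => [[|l'] ?] //= /eqP; rewrite /i0.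
    by case: (v l : nat).
  have E : C0 = v.
    apply/ffunP => i; rewrite ffunE; apply: val_inj.
    case: (eqVneq i i0) => [->|ii]; last by rewrite /= z.
    rewrite /=; move/eqP: cv; rewrite (bigD1 i0) //= big1 ?addn0 // => l li.
  by rewrite E.
Qed.

Lemma zrp_max g : balance g -> forall u, compo u -> g u / wt u <= g C0 / wt C0.
Proof.
move=> bg.
case: (arg_maxP (fun v => g v / wt v) compo_C0) => vM cM Hmax.
have cM2 := cM.
have : compo C0 /\ (forall u, compo u -> g u / wt u <= g C0 / wt C0).
  apply: (reach (P := fun v => compo v /\ (forall u, compo u -> g u / wt u <= g v / wt v))) cM _.
    move=> v j cv vS [_ Hv]; split; first exact: compo_pre.
    by rewrite (max_step bg cv Hv vS).
  by split => // u cu; apply: Hmax.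
by case.
Qed.

Lemma zrp_unique g : balance g -> forall v, compo v -> g v / wt v = g C0 / wt C0.
Proof.
move=> bg v cv; apply/eqP; rewrite eq_le zrp_max //=.
have := zrp_max (balanceN bg) cv.
by rewrite !mulNr lerN2.
Qed.
End ZRP.

Lemma ffeqP (n M : nat) (f g : {ffun 'I_n -> 'I_M}) :
  reflect (forall i, (f i : nat) = g i) (f == g).
Proof.
apply: (iffP eqP) => [-> //| H]; apply/ffunP => i; exact/val_inj/H.
Qed.

Lemma sum_indb (n : nat) (b : bool) (j : 'I_n) :
  (\sum_(i < n) ((b && (i == j)) : nat) = b)%N.
Proof. by case: b; [exact: sum_ind1 | rewrite big1]. Qed.

Lemma sum_ind_filt (k : nat) (P : pred 'I_k) (r : 'I_k) (c : bool) :
  (\sum_(r' < k | P r') (((r' == r) && c) : nat) = (P r && c))%N.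
Proof.
case Pr: (P r); last first.
  rewrite big1 // => r' Pr'; case: eqP => // E; by rewrite E Pr in Pr'.
by rewrite (bigD1 r) //= eqxx big1 ?addn0 // => r' /andP [_ /negbTE ->].
Qed.

Lemma qint_add (R : realType) (t : R) a b : qint t (b + a) = qint t b + t ^+ b * qint t a.
Proof.
rewrite /qint big_split_ord /= mulr_sumr; congr (_ + _).
by apply: eq_bigr => i _; rewrite exprD.
Qed.

Lemma telescope (R : realType) (t : R) (k : nat) (c : 'I_k -> nat) (s : nat) :
  \sum_(r < k | (s <= r)%N) t ^+ (\sum_(r' < k | (r < r')%N) c r')%N * qint t (c r)
  = qint t (\sum_(r < k | (s <= r)%N) c r)%N.
Proof.
have : forall d s, (k - s <= d)%N ->
  \sum_(r < k | (s <= r)%N) t ^+ (\sum_(r' < k | (r < r')%N) c r')%N * qint t (c r)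
  = qint t (\sum_(r < k | (s <= r)%N) c r)%N; last by apply; exact: leqnn.
elim => [|d IH] {}s hs.
  rewrite !big_pred0 ?qint0 // => r; apply/negbTE; rewrite -ltnNge;
  by apply: (leq_trans (ltn_ord r)); lia.
case: (ltnP s k) => sk; last first.
  rewrite !big_pred0 ?qint0 // => r; apply/negbTE; rewrite -ltnNge;
  by apply: (leq_trans (ltn_ord r)).
rewrite (bigD1 (Ordinal sk)) //= [in RHS](bigD1 (Ordinal sk)) //=.
have F : forall r : 'I_k, ((s <= r)%N && (r != Ordinal sk)) = (s.+1 <= r)%N.
  move=> r; apply/andP/idP => [[a /eqP b]|a]; last split; [|lia|].
  - have : (r : nat) <> s by move=> E; apply: b; apply: val_inj.
    lia.
  - by apply/eqP => E; rewrite E /= in a; lia.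
rewrite (eq_bigl _ _ F) [in RHS](eq_bigl _ _ F) IH; last by lia.
by rewrite addnC qint_add addrC.
Qed.

Section Lump.
Variables (R : realType) (k n : nat) (m : 'I_k -> nat) (x : 'I_n -> R)
  (hx : forall i, 0 < x i) (t : R) (ht : 0 < t) (s : nat).

Local Notation cfg := (config n m).

Definition mv (eta : cfg) (r : 'I_k) (j : 'I_n) : cfg :=
  [ffun r' => [ffun i => inord ((eta r' i - ((r' == r) && (i == j))) + ((r' == r) && (i == ordS j)))%N]].

Lemma valid_sum (eta : cfg) r : valid eta -> (\sum_(i < n) (eta r i : nat))%N = m r.
Proof.
clear hx ht.
by move=> /forallP /(_ r) /eqP. Qed.

Lemma m_le_tot r : (m r <= tot m)%N.
Proof.
clear hx ht.
exact: (one_le m). Qed.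

Lemma mv_val eta r j r' i : valid eta -> (0 < eta r j)%N ->
  (mv eta r j r' i : nat) = ((eta r' i - ((r' == r) && (i == j))) + ((r' == r) && (i == ordS j)))%N.
Proof.
clear hx ht.
move=> ve ej; rewrite !ffunE inordK //.
have er := ltn_ord (eta r' i).
case E1: (r' == r); case E2: (i == j); case E3: (i == ordS j) => /=; try lia;
  move/eqP: E1 => E1; subst r'.
  by move/eqP: E2 => E2; subst i; lia.
move/eqP: E3 => E3; subst i.
have := two_le (fun l => (eta r l : nat)) (negbT E2).
rewrite /= valid_sum // => h; have := m_le_tot r; lia.
Qed.

Lemma moved_mv eta r j eta' : valid eta ->
  moved eta r j eta' = (0 < eta r j)%N && (eta' == mv eta r j).
Proof.
clear hx ht.
move=> ve; rewrite /moved; case ej: (0 < eta r j)%N => //=.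
apply/forallP/eqP => [H | ->].
  apply/ffunP => r'; apply/ffunP => i; apply: val_inj => /=; rewrite mv_val //.
  exact/eqP/(forallP (H r') i).
by move=> r'; apply/forallP => i; rewrite mv_val.
Qed.

Lemma valid_mv eta r j : valid eta -> (0 < eta r j)%N -> valid (mv eta r j).
Proof.
clear hx ht.
move=> ve ej; apply/forallP => r'; apply/eqP.
under eq_bigr => i _ do rewrite mv_val //.
rewrite big_split /= sumnB; last first.
  move=> i _; case: (eqVneq r' r) => [->|] //=; case: (eqVneq i j) => [->|] //=.
rewrite !sum_indb valid_sum //.
case E: (r' == r) => /=; last by rewrite subn0 addn0.
move/eqP: E => E; subst r'.
have := one_le (fun l => (eta r l : nat)) j; rewrite /= valid_sum //; lia.
Qed.

Definition cntn (eta : cfg) (i : 'I_n) : nat := (\sum_(r < k | (s <= r)%N) eta r i)%N.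
Definition Ns : nat := (\sum_(r < k | (s <= r)%N) m r)%N.
Definition cnt (eta : cfg) : {ffun 'I_n -> 'I_Ns.+1} := [ffun i => inord (cntn eta i)].

Lemma sum_cntn eta : valid eta -> (\sum_(i < n) cntn eta i)%N = Ns.
Proof.
clear hx ht.
move=> ve; rewrite /cntn exchange_big /Ns; apply: eq_bigr => r _.
exact: valid_sum.
Qed.

Lemma cnt_val eta i : valid eta -> (cnt eta i : nat) = cntn eta i.
Proof.
clear hx ht.
move=> ve; rewrite ffunE inordK // ltnS -(sum_cntn ve).
exact: (one_le (cntn eta)).
Qed.

Lemma compo_cnt eta : valid eta -> compo (cnt eta).
Proof.
clear hx ht.
move=> ve; rewrite /compo; under eq_bigr => i _ do rewrite cnt_val //.
by rewrite sum_cntn.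
Qed.

Lemma cntn_mv eta r j i : valid eta -> (0 < eta r j)%N ->
  cntn (mv eta r j) i = ((cntn eta i - ((s <= r) && (i == j))) + ((s <= r) && (i == ordS j)))%N.
Proof.
clear hx ht.
move=> ve ej; rewrite /cntn.
under eq_bigr => r' _ do rewrite mv_val //.
rewrite big_split /= sumnB; last first.
  move=> r' _; case: (eqVneq r' r) => [->|] //=; case: (eqVneq i j) => [->|] //=.
by rewrite !sum_ind_filt.
Qed.

Lemma eta_le_cntn (eta : cfg) (r : 'I_k) (j : 'I_n) : (s <= r)%N -> (eta r j <= cntn eta j)%N.
Proof.
clear hx ht.
by move=> sr; rewrite /cntn (bigD1 r) //= leq_addr. Qed.

Lemma cnt_mv_lo eta r j : valid eta -> (0 < eta r j)%N -> ~~ (s <= r)%N ->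
  cnt (mv eta r j) = cnt eta.
Proof.
clear hx ht.
move=> ve ej sr; apply/eqP/ffeqP => i.
rewrite !cnt_val ?valid_mv // cntn_mv // (negbTE sr) /=; lia.
Qed.

Lemma cnt_mv_hi eta r j v : valid eta -> (0 < eta r j)%N -> (s <= r)%N -> compo v ->
  (cnt (mv eta r j) == v) = (cnt eta == pre j v) && (0 < v (ordS j))%N.
Proof.
clear hx ht.
move=> ve ej sr cv.
have uj := eta_le_cntn eta j sr.
case vS: (0 < v (ordS j))%N; last first.
  rewrite andbF; apply/negbTE/negP => /ffeqP /(_ (ordS j)).
  rewrite cnt_val ?valid_mv // cntn_mv // sr eqxx /=; lia.
rewrite andbT; apply/ffeqP/ffeqP => H i.
  have := H i; rewrite (cnt_val _ ve) (pre_val _ cv) // cnt_val ?valid_mv // cntn_mv // sr /=.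
  case: (eqVneq i j) => [->|ij] /=;
    [case: (eqVneq j (ordS j)) => [E|E] /=; rewrite -?E in vS |
     case: (eqVneq i (ordS j)) => [->|E] /=]; lia.
have := H i; rewrite (cnt_val _ ve) (pre_val _ cv) // cnt_val ?valid_mv // cntn_mv // sr /=.
case: (eqVneq i j) => [->|ij] /=;
  [case: (eqVneq j (ordS j)) => [E|E] /=; rewrite -?E in vS |
   case: (eqVneq i (ordS j)) => [->|E] /=]; lia.
Qed.

Definition rate (eta : cfg) (r : 'I_k) (j : 'I_n) : R := jump_rate x t eta r j.

Lemma rate0 (eta : cfg) (r : 'I_k) (j : 'I_n) : (eta r j : nat) = 0%N -> rate eta r j = 0.
Proof.
clear hx ht.
by move=> e; rewrite /rate /jump_rate e qint0 mulr0. Qed.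

Lemma rate_hi (eta : cfg) (j : 'I_n) : \sum_(r < k | (s <= r)%N) rate eta r j = (x j)^-1 * qint t (cntn eta j).
Proof.
clear hx ht.
rewrite /rate /jump_rate -telescope mulr_sumr; apply: eq_bigr => r _.
by rewrite mulrA.
Qed.

Lemma Q_out eta : valid eta ->
  \sum_(eta' | valid eta') Q x t eta eta' = \sum_(r < k) \sum_(j < n) rate eta r j.
Proof.
clear hx ht.
move=> ve; rewrite /Q exchange_big; apply: eq_bigr => r _.
rewrite exchange_big; apply: eq_bigr => j _.
under eq_bigr => e _ do rewrite moved_mv //.
case ej: (0 < eta r j)%N => /=; last first.
  by rewrite big1 // rate0 //; move: ej; case: (eta r j : nat).
rewrite (bigD1 (mv eta r j)) ?valid_mv //= eqxx big1 ?addr0 //.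
by move=> e /andP [_ /negbTE ->].
Qed.

Lemma Q_in eta' eta : valid eta' ->
  Q x t eta' eta = \sum_(r < k) \sum_(j < n)
     (if (0 < eta' r j)%N && (eta == mv eta' r j) then rate eta' r j else 0).
Proof.
clear hx ht.
move=> ve; rewrite /Q; apply: eq_bigr => r _; apply: eq_bigr => j _.
by rewrite moved_mv.
Qed.

End Lump.

Section Lump2.
Variables (R : realType) (k n : nat) (m : 'I_k -> nat) (x : 'I_n -> R)
  (hx : forall i, 0 < x i) (t : R) (ht : 0 < t) (s : nat)
  (pi : config n m -> R) (hpi : stationary x t pi).

Local Notation cfg := (config n m).
Local Notation Ns := (Ns m s).
Local Notation cnt := (cnt s).
Local Notation rate := (rate x t).

Definition nu (v : {ffun 'I_n -> 'I_Ns.+1}) : R := \sum_(eta : cfg) pi eta * (cnt eta == v)%:R.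

Lemma pi_inv (eta : cfg) : ~~ valid eta -> pi eta = 0.
Proof. by case: hpi => H _; apply: H. Qed.

Lemma pi_ext (F G : cfg -> R) : (forall eta, valid eta -> F eta = G eta) ->
  \sum_(eta : cfg) pi eta * F eta = \sum_(eta : cfg) pi eta * G eta.
Proof.
move=> H; apply: eq_bigr => eta _; case: (boolP (valid eta)) => ve.
  by rewrite H.
by rewrite pi_inv // !mul0r.
Qed.

Lemma sum_valid (F : cfg -> R) :
  \sum_(eta | valid eta) pi eta * F eta = \sum_(eta : cfg) pi eta * F eta.
Proof.
rewrite [RHS](bigID (fun e => valid e)) /= [X in _ = _ + X]big1 ?addr0 //.
by move=> eta /pi_inv ->; rewrite mul0r.
Qed.

Definition T (eta' eta : cfg) : R := \sum_(r < k) \sum_(j < n)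
     (if (0 < eta' r j)%N && (eta == mv eta' r j) then rate eta' r j else 0).
Definition out (eta : cfg) : R := \sum_(r < k) \sum_(j < n) rate eta r j.
Definition lo (eta : cfg) : R := \sum_(r < k | ~~ (s <= r)%N) \sum_(j < n) rate eta r j.

Lemma In_eq (eta : cfg) : \sum_(eta' : cfg) pi eta' * T eta' eta = pi eta * out eta.
Proof.
case: (boolP (valid eta)) => ve.
  case: hpi => _ [_ [_ H]]; have := H eta ve.
  rewrite -mulr_sumr Q_out // => <-.
  rewrite (sum_valid (fun e' => Q x t e' eta)); apply: pi_ext => e' ve'.
  by rewrite Q_in.
rewrite pi_inv // mul0r.
transitivity (\sum_(eta' : cfg) pi eta' * 0); last by rewrite big1 // => e _; rewrite mulr0.
apply: pi_ext => e' ve'; rewrite /T big1 // => r _; rewrite big1 // => j _.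
case: ifP => // /andP [ej /eqP E].
by move: ve; rewrite E valid_mv.
Qed.

Lemma T_sum (eta' : cfg) v : valid eta' -> compo v ->
  \sum_(eta : cfg) (cnt eta == v)%:R * T eta' eta =
  (cnt eta' == v)%:R * lo eta' +
  \sum_(j < n) (if (0 < v (ordS j))%N then
      (cnt eta' == pre j v)%:R * ((x j)^-1 * qint t (pre j v j)) else 0).
Proof.
move=> ve cv.
have -> : \sum_(eta : cfg) (cnt eta == v)%:R * T eta' eta =
    \sum_(r < k) \sum_(j < n) (if (0 < eta' r j)%N then
      (cnt (mv eta' r j) == v)%:R * rate eta' r j else 0).
  rewrite /T; under eq_bigr do rewrite mulr_sumr; rewrite exchange_big.
  apply: eq_bigr => r _; under eq_bigr do rewrite mulr_sumr; rewrite exchange_big.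
  apply: eq_bigr => j _.
  case ej: (0 < eta' r j)%N => /=; last by rewrite big1 // => e _; rewrite mulr0.
  rewrite (bigD1 (mv eta' r j)) //= eqxx big1 ?addr0 // => e /negbTE ->.
  by rewrite mulr0.
rewrite (bigID (fun r : 'I_k => (s <= r)%N)) /= addrC; congr (_ + _).
  rewrite /lo mulr_sumr; apply: eq_bigr => r sr; rewrite mulr_sumr.
  apply: eq_bigr => j _; case ej: (0 < eta' r j)%N.
    by rewrite cnt_mv_lo.
  by rewrite rate0 ?mulr0 //; move: ej; case: (eta' r j : nat).
rewrite exchange_big; apply: eq_bigr => j _.
rewrite (eq_bigr (fun r => ((cnt eta' == pre j v) && (0 < v (ordS j)))%N%:R * rate eta' r j)); last first.
  move=> r sr; case ej: (0 < eta' r j)%N.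
    by rewrite cnt_mv_hi.
  by rewrite rate0 ?mulr0 //; move: ej; case: (eta' r j : nat).
rewrite -mulr_sumr rate_hi.
case vS: (0 < v (ordS j))%N; last by rewrite andbF mul0r.
rewrite andbT; case E: (cnt eta' == pre j v); last by rewrite !mul0r.
by rewrite -(cnt_val s j ve) (eqP E).
Qed.

Lemma out_split (eta : cfg) v : valid eta ->
  (cnt eta == v)%:R * out eta =
  (cnt eta == v)%:R * lo eta + (cnt eta == v)%:R * \sum_(j < n) (x j)^-1 * qint t (v j).
Proof.
move=> ve; rewrite -mulrDr; case E: (cnt eta == v); last by rewrite !mul0r.
congr (_ * _); rewrite /out (bigID (fun r : 'I_k => (s <= r)%N)) /= addrC.
congr (_ + _); rewrite exchange_big /=.
apply: eq_bigr => j _; rewrite rate_hi.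
by rewrite -(cnt_val s j ve) (eqP E).
Qed.

Lemma nu_balance : balance x t nu.
Proof.
move=> v cv.
set S := \sum_(j < n) (x j)^-1 * qint t (v j).
have E3 : \sum_(e : cfg) (cnt e == v)%:R * (\sum_(e' : cfg) pi e' * T e' e)
    = \sum_(e : cfg) (cnt e == v)%:R * (pi e * out e).
  by apply: eq_bigr => e _; rewrite In_eq.
have E1 : \sum_(e : cfg) (cnt e == v)%:R * (pi e * out e)
    = \sum_(e : cfg) pi e * ((cnt e == v)%:R * lo e) + nu v * S.
  under eq_bigr do rewrite mulrCA.
  rewrite (@pi_ext (fun e => (cnt e == v)%:R * out e) (fun e => (cnt e == v)%:R * lo e +
    (cnt e == v)%:R * S)); last by move=> e ve; rewrite out_split.
  under eq_bigr do rewrite mulrDr.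
  rewrite big_split /=; congr (_ + _).
  by rewrite /nu mulr_suml; apply: eq_bigr => e _; rewrite mulrA.
have E2 : \sum_(e : cfg) (cnt e == v)%:R * (\sum_(e' : cfg) pi e' * T e' e)
    = \sum_(e : cfg) pi e * ((cnt e == v)%:R * lo e) +
      \sum_(j < n) (if (0 < v (ordS j))%N then (x j)^-1 * qint t (pre j v j) * nu (pre j v) else 0).
  transitivity (\sum_(e' : cfg) pi e' * \sum_(e : cfg) (cnt e == v)%:R * T e' e).
    under eq_bigr do rewrite mulr_sumr.
    rewrite exchange_big /=; apply: eq_bigr => e' _.
    by rewrite mulr_sumr; apply: eq_bigr => e _; rewrite mulrCA.
  rewrite (@pi_ext (fun e => \sum_(i : cfg) (cnt i == v)%:R * T e i) (fun e => (cnt e == v)%:R * lo e +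
    \sum_(j < n) (if (0 < v (ordS j))%N then
      (cnt e == pre j v)%:R * ((x j)^-1 * qint t (pre j v j)) else 0))); last first.
    by move=> e ve; rewrite T_sum.
  under eq_bigr do rewrite mulrDr.
  rewrite big_split /=; congr (_ + _).
  rewrite (eq_bigr (fun e => \sum_(j < n) pi e * (if (0 < v (ordS j))%N then
      (cnt e == pre j v)%:R * ((x j)^-1 * qint t (pre j v j)) else 0))); last by move=> e _; rewrite mulr_sumr.
  rewrite exchange_big /=.
  rewrite (eq_bigr (fun j => if (0 < v (ordS j))%N then (x j)^-1 * qint t (pre j v j) * nu (pre j v) else 0)) //.
  move=> j _; case: ifP => _; last by rewrite big1 // => e _; rewrite mulr0.
  set c := (x j)^-1 * qint t (pre j v j).
  rewrite /nu mulr_sumr; apply: eq_bigr => e _; ring.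
by apply: (addrI (\sum_(e : cfg) pi e * ((cnt e == v)%:R * lo e))); rewrite -E1 -E2.
Qed.


End Lump2.

Section Deriv.
Variables (R : realType) (n N : nat) (x : 'I_n -> R)
  (hx : forall i, 0 < x i) (t : R) (ht : 0 < t) (i0 : 'I_n).

Definition cvw (v : {ffun 'I_n -> 'I_N.+1}) : R :=
  (\prod_(i < n | i != i0) x i ^+ v i) / \prod_(i < n) qfact t (v i).

Lemma wt_setx (v : {ffun 'I_n -> 'I_N.+1}) (y : R) : wt (setx x i0 y) t v = cvw v * y ^+ v i0.
Proof.
rewrite /wt /cvw (bigD1 i0) //= /setx eqxx.
rewrite (eq_bigr (fun i => x i ^+ v i)); last by move=> i /negbTE ->.
ring.
Qed.

Lemma wt_setx_id (v : {ffun 'I_n -> 'I_N.+1}) : wt x t v = cvw v * x i0 ^+ v i0.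
Proof.
rewrite -wt_setx /wt; congr (_ / _); apply: eq_bigr => i _.
by rewrite /setx; case: eqVneq => // ->.
Qed.

Lemma is_derive_mono (c : R) (p : nat) (y0 : R) :
  is_derive y0 1 (fun y => c * y ^+ p) (c * (p%:R * y0 ^+ p.-1)).
Proof.
have D : is_derive y0 1 (@GRing.exp R ^~ p) (p%:R * y0 ^+ p.-1).
  apply: DeriveDef; first exact: exprn_derivable.
  by rewrite exp_derive [LHS]mulr1.
have -> : (fun y => c * y ^+ p) = c \*: (@GRing.exp R ^~ p) by apply/funext.
exact: is_derive_eq (is_deriveZ c D) _.
Qed.

Lemma is_derive_fsum (I : finType) (P : pred I) (F : I -> R -> R) (dF : I -> R) (y0 : R) :
  (forall i, is_derive y0 1 (F i) (dF i)) ->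
  is_derive y0 1 (fun y => \sum_(i | P i) F i y) (\sum_(i | P i) dF i).
Proof.
move=> H.
have -> : (fun y => \sum_(i | P i) F i y) = \sum_(i | P i) F i.
  by apply/funext => y; rewrite fct_sumE.
elim/big_rec2 : _ => [|i d f _ IH]; first exact: is_derive_cst.
exact: is_deriveD.
Qed.

Lemma is_derive_W (y0 : R) :
  is_derive y0 1 (fun y => \sum_(v : {ffun 'I_n -> 'I_N.+1} | compo v) wt (setx x i0 y) t v)
    (\sum_(v : {ffun 'I_n -> 'I_N.+1} | compo v) cvw v * ((v i0)%:R * y0 ^+ (v i0).-1)).
Proof.
have -> : (fun y => \sum_(v : {ffun 'I_n -> 'I_N.+1} | compo v) wt (setx x i0 y) t v) =
          (fun y => \sum_(v : {ffun 'I_n -> 'I_N.+1} | compo v) cvw v * y ^+ v i0).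
  by apply/funext => y; apply: eq_bigr => v _; rewrite wt_setx.
apply: is_derive_fsum => v; exact: is_derive_mono.
Qed.

Lemma xW' : x i0 * \sum_(v : {ffun 'I_n -> 'I_N.+1} | compo v) cvw v * ((v i0)%:R * x i0 ^+ (v i0).-1)
  = \sum_(v : {ffun 'I_n -> 'I_N.+1} | compo v) (v i0)%:R * wt x t v.
Proof.
rewrite mulr_sumr; apply: eq_bigr => v _; rewrite wt_setx_id.
case: (v i0 : nat) => [|p] /=; first by rewrite !mul0r !mulr0.
rewrite exprS; ring.
Qed.

Lemma Htilde_eq (z : 'I_n -> R) : Htilde N z t = qfact t N * \sum_(v : {ffun 'I_n -> 'I_N.+1} | compo v) wt z t v.
Proof.
rewrite /Htilde mulr_sumr; apply: eq_bigr => v _; rewrite /wt; ring.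
Qed.

Lemma W_gt0 (hn : (0 < n)%N) (z : 'I_n -> R) : (forall i, 0 < z i) ->
  0 < \sum_(v : {ffun 'I_n -> 'I_N.+1} | compo v) wt z t v.
Proof.
move=> hz; rewrite (bigD1 (C0 N hn)) ?compo_C0 //=.
have := @wt_gt0 R n N z hz t ht (C0 N hn).
have : 0 <= \sum_(i | compo i && (i != C0 N hn)) wt z t i.
  by apply: sumr_ge0 => v _; apply: ltW; apply: wt_gt0.
lra.
Qed.
End Deriv.

Section Deriv2.
Variables (R : realType) (n : nat) (x : 'I_n -> R)
  (hx : forall i, 0 < x i) (t : R) (ht : 0 < t) (hn : (0 < n)%N) (i0 : 'I_n).

Definition Wf (N : nat) (z : 'I_n -> R) : R := \sum_(v : {ffun 'I_n -> 'I_N.+1} | compo v) wt z t v.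
Definition Sf (N : nat) : R := \sum_(v : {ffun 'I_n -> 'I_N.+1} | compo v) (v i0)%:R * wt x t v.
Definition dW (N : nat) : R :=
  \sum_(v : {ffun 'I_n -> 'I_N.+1} | compo v) cvw x t i0 v * ((v i0)%:R * x i0 ^+ (v i0).-1).

Lemma is_derive_H (N : nat) :
  is_derive (x i0) 1 (fun y => Htilde N (setx x i0 y) t) (qfact t N * dW N).
Proof.
have -> : (fun y => Htilde N (setx x i0 y) t) = qfact t N \*: (fun y => Wf N (setx x i0 y)).
  by apply/funext => y; rewrite Htilde_eq.
rewrite /Wf; apply: is_derive_eq; first exact: (is_deriveZ (qfact t N) (@is_derive_W R n N x t i0 (x i0))).
by [].
Qed.

Lemma setx_id : setx x i0 (x i0) = x.
Proof. by apply/funext => i; rewrite /setx; case: eqVneq => // ->. Qed.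

Lemma H_x0 N : Htilde N (setx x i0 (x i0)) t = qfact t N * Wf N x.
Proof. by rewrite setx_id Htilde_eq. Qed.

Lemma deriv_main (a b : nat) :
  x i0 * derive1 (fun y : R => ln (Htilde a (setx x i0 y) t / Htilde b (setx x i0 y) t)) (x i0)
  = Sf a / Wf a x - Sf b / Wf b x.
Proof.
set Ha := fun y => Htilde a (setx x i0 y) t.
set Hb := fun y => Htilde b (setx x i0 y) t.
have Wa : 0 < Wf a x := W_gt0 _ ht hn hx.
have Wb : 0 < Wf b x := W_gt0 _ ht hn hx.
have qa : 0 < qfact t a := qfact_gt0 a ht.
have qb : 0 < qfact t b := qfact_gt0 b ht.
have HaE : Ha (x i0) = qfact t a * Wf a x by rewrite /Ha H_x0.
have HbE : Hb (x i0) = qfact t b * Wf b x by rewrite /Hb H_x0.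
have hA := is_derive_H a; have hB := is_derive_H b.
have hbn : Hb (x i0) != 0 by rewrite HbE; apply/lt0r_neq0/mulr_gt0.
have hV := is_deriveV hbn hB.
have hM := is_deriveM hA hV.
have hpos : 0 < Ha (x i0) * (Hb (x i0))^-1.
  by rewrite HaE HbE; apply: divr_gt0; apply: mulr_gt0.
have hC := @is_derive1_comp _ (@ln R) (Ha * (fun y => (Hb y)^-1)) (x i0) _ _ (is_derive1_ln hpos) hM.
have -> : (fun y : R => ln (Htilde a (setx x i0 y) t / Htilde b (setx x i0 y) t))
  = (@ln R) \o (Ha * (fun y => (Hb y)^-1)) by apply/funext.
rewrite derive1E; have [_ ->] := hC.
rewrite /GRing.scale /= /Ha /Hb !H_x0 /Sf -(xW' a x t i0) -(xW' b x t i0) -/(dW a) -/(dW b).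
have h1 : qfact t a != 0 by apply/lt0r_neq0.
have h2 : qfact t b != 0 by apply/lt0r_neq0.
have h3 : Wf a x != 0 by apply/lt0r_neq0.
have h4 : Wf b x != 0 by apply/lt0r_neq0.
field.
by rewrite h1 h2 h3 h4.
Qed.
End Deriv2.

Lemma cntn_split (k n : nat) (m : 'I_k -> nat) (eta : config n m) (j : 'I_k) (i : 'I_n) :
  cntn j eta i = (eta j i + cntn j.+1 eta i)%N.
Proof.
rewrite /cntn (bigD1 j) //=; congr addn; apply: eq_bigl => r.
rewrite ltn_neqAle andbC; congr andb.
by rewrite eq_sym.
Qed.

Section Final.
Variables (R : realType) (k : nat) (m : 'I_k -> nat) (n : nat) (hn : (0 < n)%N)
  (x : 'I_n -> R) (hx : forall i, 0 < x i) (t : R) (ht : 0 < t)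
  (pi : config n m -> R) (hpi : stationary x t pi).

Lemma E_thr (s : nat) :
  \sum_(eta | valid eta) pi eta * (cntn s eta (Ordinal hn))%:R
  = Sf x t (Ordinal hn) (Ns m s) / Wf t (Ns m s) x.
Proof.
set i0 := Ordinal hn.
set N := Ns m s.
set g := @nu R k n m s pi.
have bg : balance x t g := nu_balance hpi.
set c := g (C0 N hn) / wt x t (C0 N hn).
have gE : forall v, compo v -> g v = c * wt x t v.
  move=> u cu; have w0 : wt x t u != 0 := lt0r_neq0 (wt_gt0 hx ht u).
  by rewrite /c -(zrp_unique hn hx ht bg cu) divfK.
have sum1 : \sum_(v : {ffun 'I_n -> 'I_N.+1} | compo v) g v = 1.
  transitivity (\sum_(e : config n m) pi e * \sum_(v : {ffun 'I_n -> 'I_N.+1} | compo v) (cnt s e == v)%:R).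
    rewrite /g /nu exchange_big /=; apply: eq_bigr => e _; by rewrite mulr_sumr.
  rewrite (pi_ext hpi (G := fun _ => 1)).
    case: hpi => _ [_ [H _]]; rewrite -(sum_valid hpi); rewrite -[RHS]H.
    by apply: eq_bigr => e _; rewrite mulr1.
  move=> e ve; rewrite (bigD1 (cnt s e)) ?compo_cnt //= eqxx big1 ?addr0 //.
  by move=> v /andP [_ /negbTE]; rewrite eq_sym => ->.
have LE : \sum_(eta | valid eta) pi eta * (cntn s eta i0)%:R
    = \sum_(v : {ffun 'I_n -> 'I_N.+1} | compo v) (v i0)%:R * g v.
  transitivity (\sum_(e : config n m) pi e * \sum_(v : {ffun 'I_n -> 'I_N.+1} | compo v) (v i0)%:R * (cnt s e == v)%:R); last first.
    rewrite /g /nu; under [RHS]eq_bigr do rewrite mulr_sumr.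
    rewrite [RHS]exchange_big /=; apply: eq_bigr => e _; rewrite mulr_sumr.
    by apply: eq_bigr => v _; rewrite mulrCA.
  rewrite (sum_valid hpi); apply: (pi_ext hpi) => e ve.
  rewrite (bigD1 (cnt s e)) ?compo_cnt //= eqxx big1 ?addr0 ?mulr1 ?cnt_val //.
  by move=> v /andP [_ /negbTE]; rewrite eq_sym => ->; rewrite mulr0.
etransitivity; first exact: LE.
have c1 : c * Wf t N x = 1.
  by rewrite -sum1 /Wf mulr_sumr; apply: eq_bigr => v cv; rewrite gE.
have -> : \sum_(v : {ffun 'I_n -> 'I_N.+1} | compo v) (v i0)%:R * g v = c * Sf x t i0 N.
  rewrite /Sf mulr_sumr; apply: eq_bigr => v cv; rewrite gE //; ring.
have hW : Wf t N x != 0 by apply/lt0r_neq0/W_gt0.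
have -> : c = (Wf t N x)^-1 by apply: (mulIf hW); rewrite c1 mulVf.
by rewrite mulrC.
Qed.

End Final.

Unset Implicit Arguments.
Theorem theorem7 (R : realType) (k : nat) (m : 'I_k -> nat)
  (hm : forall r, (0 < m r)%N) (n : nat) (hn : (0 < n)%N)
  (x : 'I_n -> R) (hx : forall i, 0 < x i) (t : R) (ht : 0 < t)
  (pi : config n m -> R) (hpi : stationary x t pi) (j : 'I_k) :
  expected_count pi j (Ordinal hn) =
  x (Ordinal hn) *
    derive1 (fun y : R =>
      ln (Htilde (Mge m j) (setx x (Ordinal hn) y) t /
          Htilde (Mgt m j) (setx x (Ordinal hn) y) t)) (x (Ordinal hn)).
Proof.
rewrite (deriv_main hx ht hn).
have -> : Mge m j = Ns m j by [].
have -> : Mgt m j = Ns m j.+1 by [].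
rewrite -(E_thr hn hx ht hpi) -(E_thr hn hx ht hpi) -sumrB /expected_count.
apply: eq_bigr => eta _; rewrite -mulrBr cntn_split natrD.
by rewrite addrK.
Qed.
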